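(* Let $p_{XYZ}$ be a joint distribution on finite sets in normal form. In any secure sampling protocol $\Pi(p_{XYZ})$, $H(X|M_{12},M_{31})=0$, $H(Y|M_{12},M_{23})=0$ and $H(Z|M_{23},M_{31})=0$.
   Context: Secure sampling: three parties Alice (1), Bob (2), Charlie (3) receive no inputs; each has private randomness, they exchange messages over multiple rounds on three pairwise private links (each message a codeword of a prefix-free code determined by previous messages on that link; termination with probability 1), and at the end Alice outputs $X$, Bob $Y$, Charlie $Z$. $M_{12},M_{23},M_{31}$ are the final transcripts on the Alice–Bob, Bob–Charlie, Charlie–Alice links. The protocol $\Pi(p_{XYZ})$ is a secure sampling protocol for $p_{XYZ}$ if $(X,Y,Z)\sim p_{XYZ}$ and the Markov chains $(M_{12},M_{31})-X-(Y,Z)$, $(M_{12},M_{23})-Y-(X,Z)$, $(M_{23},M_{31})-Z-(X,Y)$ hold. Normal form: $p_{XYZ}$ is in normal form if whenever $x,x'$ satisfy $p(x,y,z)=c\,p(x',y,z)$ for all $y,z$ for some constant $c\ge0$ then $x=x'$, and similarly for $y,y'$ and for $z,z'$. *)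

(* Defs.v *)
From HB Require Import structures.
From mathcomp Require Import all_boot all_order all_algebra.
From mathcomp Require Import all_classical all_reals all_analysis.
Set Implicit Arguments. Unset Strict Implicit. Unset Printing Implicit Defensive.
Import Order.TTheory GRing.Theory Num.Theory.
Local Open Scope classical_set_scope.
Local Open Scope ring_scope.

Inductive party := Alice | Bob | Charlie.
Inductive link := L12 | L23 | L31.

Definition link_eqb (l l' : link) : bool :=
  match l, l' with
  | L12, L12 | L23, L23 | L31, L31 => true
  | _, _ => false
  end.

Definition endpoint (l : link) (b : bool) : party :=
  match l, b with
  | L12, false => Alice   | L12, true => Bob
  | L23, false => Bob     | L23, true => Charlie
  | L31, false => Charlie | L31, true => Alice
  end.

Definition lnk1 (i : party) : link :=
  match i with Alice => L12 | Bob => L12 | Charlie => L23 end.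
Definition lnk2 (i : party) : link :=
  match i with Alice => L31 | Bob => L23 | Charlie => L31 end.

(* A link history is the list of messages (bit strings) exchanged so far on
   that link, in chronological order, in both directions.
   [U] is the type of the private randomness of each party.
   - at step t, the message is sent on link (sched t).1 by the endpoint
     selected by (sched t).2 (a fixed, arbitrary schedule of speakers);
   - [code l h] is the prefix-free code used for the next message on link l
     when the history of l is h;
   - [stop l h] : link l is finished once its history is h (no more messages);
   - [msg i t r h1 h2] : message sent by party i at step t, given its private
     randomness r and the histories h1, h2 of its links lnk1 i, lnk2 i;
   - [out i r h1 h2] : output of party i given its final view. *)
Record protocol (U : Type) (Out : party -> finType) := Protocol {
  sched : nat -> link * bool;
  code : link -> seq (seq bool) -> set (seq bool);
  stop : link -> seq (seq bool) -> bool;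
  msg : party -> nat -> U -> seq (seq bool) -> seq (seq bool) -> seq bool;
  out : forall i : party, U -> seq (seq bool) -> seq (seq bool) -> Out i }.

Section Execution.
Context {U : Type} {Out : party -> finType} (Pi : protocol U Out).

Fixpoint hist (u : party -> U) (t : nat) : link -> seq (seq bool) :=
  match t with
  | 0 => fun _ => [::]
  | t'.+1 =>
    let h := hist u t' in
    let l := (sched Pi t').1 in
    let s := endpoint l (sched Pi t').2 in
    fun l' =>
      if link_eqb l' l && ~~ stop Pi l (h l)
      then rcons (h l) (msg Pi s t' (u s) (h (lnk1 s)) (h (lnk2 s)))
      else h l'
  end.

Definition terminated (u : party -> U) (t : nat) : bool :=
  [&& stop Pi L12 (hist u t L12), stop Pi L23 (hist u t L23)
    & stop Pi L31 (hist u t L31)].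

Definition final_hist (u : party -> U) (l : link) : seq (seq bool) :=
  hist u (xget 0%N [set t | terminated u t]) l.

Definition transcript (u : party -> U) (l : link) : seq bool :=
  flatten (final_hist u l).

Definition output (u : party -> U) (i : party) : Out i :=
  out Pi i (u i) (final_hist u (lnk1 i)) (final_hist u (lnk2 i)).

Definition prefix_free (C : set (seq bool)) : Prop :=
  forall a b, C a -> C b -> prefix a b -> a = b.

Definition wf_protocol : Prop :=
  (forall l h, prefix_free (code Pi l h)) /\
  (forall u t,
     let l := (sched Pi t).1 in
     let s := endpoint l (sched Pi t).2 in
     ~~ stop Pi l (hist u t l) ->
     code Pi l (hist u t l)
       (msg Pi s t (u s) (hist u t (lnk1 s)) (hist u t (lnk2 s)))).

End Execution.

Section Probability.
Context {R : realType} {d : measure_display} {T : measurableType d}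
        (P : probability T R).

Definition markov {TA TB TC : Type} (A : T -> TA) (B : T -> TB) (C : T -> TC)
  : Prop :=
  forall a b c,
    (P [set w | A w = a /\ B w = b /\ C w = c] * P [set w | B w = b] =
     P [set w | A w = a /\ B w = b] * P [set w | B w = b /\ C w = c])%E.

(* conditional entropy H(X|M) (in nats) of a finite-valued X given a
   discrete (countable-valued) M, with the convention 0 ln 0 = 0
   (ln 0 = 0 in mathcomp-analysis). *)
Definition cond_entropy {A : finType} {B : choiceType}
  (X : T -> A) (M : T -> B) : \bar R :=
  \esum_(xm in [set: A * B])
    (let pxm := fine (P [set w | X w = xm.1 /\ M w = xm.2]) in
     let pm := fine (P [set w | M w = xm.2]) in
     (- (pxm * ln (pxm / pm)))%:E).

Context {dU : measure_display} {U : measurableType dU}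
        (rnd : party -> T -> U) {Out : party -> finType}
        (Pi : protocol U Out).

Definition rv_out (i : party) (w : T) : Out i := output Pi (fun j => rnd j w) i.
Definition rv_tr (l : link) (w : T) : seq bool :=
  transcript Pi (fun j => rnd j w) l.

Definition measurable_protocol : Prop :=
  and (forall i t h1 h2 s, measurable [set r : U | msg Pi i t r h1 h2 = s])
      (forall i h1 h2 x, measurable [set r : U | out Pi i r h1 h2 = x]).

Definition protocol_setting : Prop :=
  [/\ (forall i, measurable_fun setT (rnd i)),
      (forall S1 S2 S3 : set U, measurable S1 -> measurable S2 ->
         measurable S3 ->
         P [set w | S1 (rnd Alice w) /\ S2 (rnd Bob w) /\ S3 (rnd Charlie w)] =
         (P [set w | S1 (rnd Alice w)] * P [set w | S2 (rnd Bob w)] *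
          P [set w | S3 (rnd Charlie w)])%E),
      measurable_protocol,
      wf_protocol Pi &
      P [set w | exists t, terminated Pi (fun j => rnd j w) t] = 1%E].

Definition secure_sampling
  (p : Out Alice -> Out Bob -> Out Charlie -> R) : Prop :=
  [/\ (forall x y z,
         P [set w | rv_out Alice w = x /\ rv_out Bob w = y /\
                    rv_out Charlie w = z] = (p x y z)%:E),
      markov (fun w => (rv_tr L12 w, rv_tr L31 w)) (rv_out Alice)
             (fun w => (rv_out Bob w, rv_out Charlie w)),
      markov (fun w => (rv_tr L12 w, rv_tr L23 w)) (rv_out Bob)
             (fun w => (rv_out Alice w, rv_out Charlie w)) &
      markov (fun w => (rv_tr L23 w, rv_tr L31 w)) (rv_out Charlie)
             (fun w => (rv_out Alice w, rv_out Bob w))].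

End Probability.

Definition is_distribution {R : realType} {A B C : finType}
  (p : A -> B -> C -> R) : Prop :=
  (forall x y z, 0 <= p x y z) /\ \sum_(x : A) \sum_(y : B) \sum_(z : C) p x y z = 1.

Definition normal_form {R : realType} {A B C : finType}
  (p : A -> B -> C -> R) : Prop :=
  [/\ (forall x x', (exists c : R, 0 <= c /\ forall y z, p x y z = c * p x' y z)
         -> x = x'),
      (forall y y', (exists c : R, 0 <= c /\ forall x z, p x y z = c * p x y' z)
         -> y = y') &
      (forall z z', (exists c : R, 0 <= c /\ forall x y, p x y z = c * p x y z')
         -> z = z')].

(* Main.v *)
Require Import Defs.
From HB Require Import structures.
From mathcomp Require Import all_boot all_order all_algebra.
From mathcomp Require Import all_classical all_reals all_analysis.
From mathcomp Require Import ring lra.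
Import Defs.
Set Implicit Arguments. Unset Strict Implicit. Unset Printing Implicit Defensive.
Section Comb.
Context {U : Type} {Out : party -> finType} (Pi : protocol U Out).

Lemma link_eqbP l l' : link_eqb l l' = true <-> l = l'.
Proof. by case: l; case: l'. Qed.

Lemma histS u t l : hist Pi u t.+1 l =
  (if link_eqb l (sched Pi t).1 &&
      ~~ stop Pi (sched Pi t).1 (hist Pi u t (sched Pi t).1)
   then rcons (hist Pi u t (sched Pi t).1)
     (msg Pi (endpoint (sched Pi t).1 (sched Pi t).2) t
        (u (endpoint (sched Pi t).1 (sched Pi t).2))
        (hist Pi u t (lnk1 (endpoint (sched Pi t).1 (sched Pi t).2)))
        (hist Pi u t (lnk2 (endpoint (sched Pi t).1 (sched Pi t).2))))
   else hist Pi u t l).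
Proof. by []. Qed.

Fixpoint tr (l : link) (H : seq (seq bool)) (t : nat) : seq (seq bool) :=
  match t with
  | 0 => [::]
  | t'.+1 => let g := tr l H t' in
     if link_eqb l (sched Pi t').1 && ~~ stop Pi l g then take (size g).+1 H
     else g
  end.

Lemma tr_take l H t : exists j, tr l H t = take j H.
Proof.
elim: t => [|t [j IH]] /=; first by exists 0%N; rewrite take0.
case: ifP => _; first by eexists.
by exists j.
Qed.

Definition VR (l : link) (H : seq (seq bool)) : Prop :=
  [/\ stop Pi l H,
      (forall k, (k < size H)%N ->
         ~~ stop Pi l (take k H) /\ code Pi l (take k H) (nth [::] H k)) &
      exists t, tr l H t = H].

Lemma tr_stop l H t : VR l H -> stop Pi l (tr l H t) -> tr l H t = H.
Proof.
move=> [_ VH _]; have [j ->] := tr_take l H t.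
case: (ltnP j (size H)) => jH; last by rewrite take_oversize.
by have [/negP ? _] := VH j jH.
Qed.

Lemma tr_nstop l H t : VR l H -> ~~ stop Pi l (tr l H t) ->
  (size (tr l H t) < size H)%N /\ tr l H t = take (size (tr l H t)) H.
Proof.
move=> [sH _ _]; have [j ->] := tr_take l H t.
case: (ltnP j (size H)) => jH; last by rewrite take_oversize // sH.
by rewrite size_take jH.
Qed.

Lemma tr_mono l H t n : VR l H -> tr l H t = H -> tr l H (t + n) = H.
Proof.
move=> [sH _ _] E; elim: n => [|n IH]; first by rewrite addn0.
by rewrite addnS /= IH sH andbF.
Qed.

Lemma cat_prefix (a b x y : seq bool) : a ++ x = b ++ y ->
  prefix a b \/ prefix b a.
Proof.
move=> E; case: (leqP (size a) (size b)) => ab.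
  left; rewrite prefixE -{2}(take_size_cat x (erefl (size a))) E.
  by rewrite takel_cat.
right; rewrite prefixE -{2}(take_size_cat y (erefl (size b))) -E.
by rewrite takel_cat // ltnW.
Qed.

Lemma VR_inj_gen l (pf : forall h, prefix_free (code Pi l h)) : forall s g s',
  VR l (g ++ s) -> VR l (g ++ s') -> flatten s = flatten s' -> s = s'.
Proof.
elim=> [|c s1 IH] g [|c' s1'] // [sH VH RH] [sH' VH' RH'] Ef.
- have := (VH' (size g)); rewrite size_cat /= addnS ltnS leq_addr take_size_cat //.
  by rewrite cats0 in sH; rewrite sH => /(_ isT) [].
- have := (VH (size g)); rewrite size_cat /= addnS ltnS leq_addr take_size_cat //.
  by rewrite cats0 in sH'; rewrite sH' => /(_ isT) [].
have := (VH (size g)); rewrite size_cat /= addnS ltnS leq_addr take_size_cat //.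
move=> /(_ isT) [_]; rewrite nth_cat ltnn subnn => cg.
have := (VH' (size g)); rewrite size_cat /= addnS ltnS leq_addr take_size_cat //.
move=> /(_ isT) [_]; rewrite nth_cat ltnn subnn => cg'.
move: Ef => /= Ef.
have ecc : c = c'.
  case: (cat_prefix Ef) => pr; first exact: (pf g c c' cg cg' pr).
  exact/esym/(pf g c' c cg' cg pr).
subst c'; have {}Ef := congr1 (drop (size c)) Ef; rewrite !drop_size_cat // in Ef; congr (_ :: _).
by apply: (IH (rcons g c)); rewrite ?cat_rcons //; split.
Qed.

Lemma VR_inj l (pf : forall h, prefix_free (code Pi l h)) H H' :
  VR l H -> VR l H' -> flatten H = flatten H' -> H = H'.
Proof. exact: (@VR_inj_gen l pf H [::] H'). Qed.


Lemma ivt (f : nat -> nat) n k : f 0%N = 0%N -> (forall t, (f t.+1 <= (f t).+1)%N) ->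
  (k < f n)%N -> exists t, f t = k /\ f t.+1 = k.+1.
Proof.
move=> f0 fS; elim: n => [|n IH]; first by rewrite f0.
case: (ltnP k (f n)) => kn; first by move=> _; exact: IH.
move=> kn1; exists n; have := fS n => h.
have e : f n = k by apply/eqP; rewrite eqn_leq kn -ltnS (leq_trans kn1 h).
by split => //; apply/eqP; rewrite eqn_leq -{1}e h kn1.
Qed.

Lemma hist_prefix u t n l : exists s, hist Pi u (t + n) l = hist Pi u t l ++ s.
Proof.
elim: n => [|n [s IH]]; first by exists [::]; rewrite addn0 cats0.
rewrite addnS histS; case: ifP => [/andP[/link_eqbP E _]|_]; last by exists s.
subst l; rewrite IH -cats1 -catA; eexists; reflexivity.
Qed.

Lemma stop_term u t l : terminated Pi u t -> stop Pi l (hist Pi u t l).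
Proof. by case/and3P; case: l. Qed.

Lemma hist_term u t n : terminated Pi u t -> forall l, hist Pi u (t + n) l = hist Pi u t l.
Proof.
move=> Tm; elim: n => [|n IH] l; first by rewrite addn0.
rewrite addnS histS !IH stop_term // andbF.
by [].
Qed.

Lemma hist_pre u t1 t l : terminated Pi u t1 ->
  hist Pi u t l = take (size (hist Pi u t l)) (hist Pi u t1 l).
Proof.
move=> Tm; case: (leqP t t1) => tt.
  have [s E] := hist_prefix u t (t1 - t) l; rewrite subnKC // in E.
  by rewrite E take_size_cat.
have := hist_term (t - t1) Tm l; rewrite subnKC; last exact: ltnW.
move=> ->.
by rewrite take_size.
Qed.

Lemma link_eqb_refl l : link_eqb l l = true.
Proof. by case: l. Qed.

Lemma hist_tr u t1 t l : terminated Pi u t1 ->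
  hist Pi u t l = tr l (hist Pi u t1 l) t.
Proof.
move=> Tm; elim: t l => [|t IH] l; first by [].
rewrite [LHS](hist_pre t.+1 l Tm) [tr _ _ t.+1]/= -!IH.
case E: (link_eqb l (sched Pi t).1) => /=.
  move/link_eqbP: E => E; subst l.
  rewrite link_eqb_refl /=.
  case: ifP => _; first by rewrite size_rcons.
  by rewrite -hist_pre.
by rewrite E /= -hist_pre.
Qed.

Lemma hist_msg u t1 t : terminated Pi u t1 ->
  ~~ stop Pi (sched Pi t).1 (hist Pi u t (sched Pi t).1) ->
  (size (hist Pi u t (sched Pi t).1) < size (hist Pi u t1 (sched Pi t).1))%N /\
  msg Pi (endpoint (sched Pi t).1 (sched Pi t).2) t
        (u (endpoint (sched Pi t).1 (sched Pi t).2))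
        (hist Pi u t (lnk1 (endpoint (sched Pi t).1 (sched Pi t).2)))
        (hist Pi u t (lnk2 (endpoint (sched Pi t).1 (sched Pi t).2)))
  = nth [::] (hist Pi u t1 (sched Pi t).1) (size (hist Pi u t (sched Pi t).1)).
Proof.
move=> Tm ns.
have E := hist_pre t.+1 (sched Pi t).1 Tm.
rewrite histS link_eqb_refl ns /= size_rcons in E.
have lt : (size (hist Pi u t (sched Pi t).1) < size (hist Pi u t1 (sched Pi t).1))%N.
  have := congr1 size E; rewrite size_rcons size_take_min => ->.
  exact: geq_minr.
split => //.
rewrite (take_nth [::] lt) -(hist_pre _ _ Tm) in E.
by have := congr1 (last [::]) E; rewrite !last_rcons.
Qed.

Definition pick (s : party) (h1 h2 : seq (seq bool)) (l : link) :=
  if link_eqb l (lnk1 s) then h1 else h2.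

Lemma pick_end (H : link -> seq (seq bool)) l b :
  pick (endpoint l b) (H (lnk1 (endpoint l b))) (H (lnk2 (endpoint l b))) l = H l.
Proof. by case: l; case: b. Qed.

Definition Cons (s : party) (r : U) (h1 h2 : seq (seq bool)) : Prop :=
  forall t, endpoint (sched Pi t).1 (sched Pi t).2 = s ->
  ~~ stop Pi (sched Pi t).1 (tr (sched Pi t).1 (pick s h1 h2 (sched Pi t).1) t) ->
  msg Pi s t r (tr (lnk1 s) h1 t) (tr (lnk2 s) h2 t) =
  nth [::] (pick s h1 h2 (sched Pi t).1)
     (size (tr (sched Pi t).1 (pick s h1 h2 (sched Pi t).1) t)).

Lemma final_term u : (exists t, terminated Pi u t) ->
  terminated Pi u (xget 0%N [set t | terminated Pi u t]).
Proof. by move=> ex; apply: (xgetPex 0%N ex). Qed.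

Lemma run_char2 u : wf_protocol Pi -> (exists t, terminated Pi u t) ->
  (forall l, VR l (final_hist Pi u l)) /\
  (forall s, Cons s (u s) (final_hist Pi u (lnk1 s)) (final_hist Pi u (lnk2 s))).
Proof.
move=> [_ wf2] /final_term; rewrite /final_hist.
set t1 := xget _ _ => Tm; split.
  move=> l; split; first exact: stop_term.
    move=> k kH.
    have [t [ft ft1]] : exists t, size (hist Pi u t l) = k /\
        size (hist Pi u t.+1 l) = k.+1.
      apply: (@ivt (fun t => size (hist Pi u t l)) t1 k) => // t.
      rewrite histS; case: ifP => [/andP[/link_eqbP -> _]|_].
        by rewrite size_rcons.
      exact: leqnSn.
    move: ft1; rewrite histS; case: ifP => [/andP[/link_eqbP El ns] _|_]; last first.
      by rewrite ft => /eqP; rewrite eqn_leq ltnn andbF.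
    subst l.
    have [_ hm] := hist_msg Tm ns.
    rewrite -ft -(hist_pre _ _ Tm) ns -hm; split => //.
    exact: wf2.
  by exists t1; rewrite -hist_tr.
move=> s t Es; subst s; rewrite !pick_end -!hist_tr // => ns.
by have [_ ->] := hist_msg Tm ns.
Qed.

Lemma hist_tr2 u H : (forall l, VR l (H l)) ->
  (forall s, Cons s (u s) (H (lnk1 s)) (H (lnk2 s))) ->
  forall t l, hist Pi u t l = tr l (H l) t.
Proof.
move=> HV HC; elim=> [|t IH] l; first by [].
rewrite histS [tr _ _ t.+1]/= !IH.
case E: (link_eqb l (sched Pi t).1) => /=; last by [].
move/link_eqbP: E => E; subst l; idtac.
case: ifP => ns //.
have C := HC (endpoint (sched Pi t).1 (sched Pi t).2) t erefl.
rewrite !pick_end in C; rewrite (C ns).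
have [lt e] := tr_nstop (HV _) ns.
by rewrite (take_nth [::] lt) -e.
Qed.

Lemma tr_reach l H t t' : VR l H -> tr l H t = H -> (t <= t')%N -> tr l H t' = H.
Proof. by move=> V E tt; rewrite -(subnKC tt); apply: tr_mono. Qed.

Lemma run_char1 u H : (forall l, VR l (H l)) ->
  (forall s, Cons s (u s) (H (lnk1 s)) (H (lnk2 s))) ->
  (exists t, terminated Pi u t) /\ forall l, final_hist Pi u l = H l.
Proof.
move=> HV HC; have E := hist_tr2 HV HC.
have [_ _ [t12 R12]] := HV L12.
have [_ _ [t23 R23]] := HV L23.
have [_ _ [t31 R31]] := HV L31.
have ex : exists t, terminated Pi u t.
  exists (t12 + t23 + t31)%N; rewrite /terminated !E.
  rewrite (tr_reach (HV L12) R12); last by rewrite -addnA leq_addr.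
  rewrite (tr_reach (HV L23) R23); last by rewrite addnAC leq_addl.
  rewrite (tr_reach (HV L31) R31); last by rewrite leq_addl.
  by have [s1 _ _] := HV L12; have [s2 _ _] := HV L23; have [s3 _ _] := HV L31;
     rewrite s1 s2 s3.
split => // l; have := stop_term l (final_term ex).
by rewrite /final_hist E => /tr_stop; apply.
Qed.

End Comb.

Section Alg.
Import Order.TTheory GRing.Theory Num.Theory.
Local Open Scope ring_scope.
Local Open Scope ereal_scope.
Context {R : realType}.

Lemma alg_one (X YZ : Type) (al : X -> \bar R) (g : YZ -> \bar R) (G : \bar R)
  (Px : X -> \bar R) (q : X -> YZ -> R) x :
  (forall x, 0 <= al x) -> (forall x, al x \is a fin_num) ->
  (forall yz, 0 <= g yz) -> 0 <= G ->
  (forall x, Px x \is a fin_num) -> (forall x, al x * G <= Px x) ->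
  (forall x yz, al x * g yz * Px x = al x * G * (q x yz)%:E) ->
  0 < al x * G ->
  exists G' px, G = G'%:E /\ Px x = px%:E /\ (0 < G')%R /\ (0 < px)%R /\
    forall yz, (q x yz = fine (g yz) * px / G')%R.
Proof.
move=> al0 alf g0 G0 Pxf le eq pos.
have alx : 0 < al x.
  rewrite lt0e al0 andbT; apply/negP => /eqP e.
  by move: pos; rewrite e mul0e ltxx.
have Gp : 0 < G by rewrite -(pmule_rgt0 _ alx).
have [a ea] : exists a, al x = a%:E by exists (fine (al x)); rewrite fineK.
have a0 : (0 < a)%R by rewrite -lte_fin -ea.
have [px epx] : exists px, Px x = px%:E by exists (fine (Px x)); rewrite fineK.
have px0 : (0 < px)%R by rewrite -lte_fin -epx (lt_le_trans pos).
case: G G0 Gp eq le pos => [G'| |] // _ Gp eq le pos; last first.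
  by have := le x; rewrite gt0_muley // epx.
exists G', px; do 4!split => //.
move=> yz; have := eq x yz; rewrite ea epx.
have := g0 yz; case: (g yz) => [g'| |] //= _; last first.
  by rewrite gt0_muley ?lte_fin // gt0_mulye ?lte_fin.
rewrite -!EFinM => /eqP; rewrite eqe => /eqP h.
have G'0 : G' != 0%R by rewrite gt_eqF.
have a0' : a != 0%R by rewrite gt_eqF.
have -> : q x yz = (a * G' * q x yz / (a * G'))%R by field; apply/andP; split.
by rewrite -h; field; apply/andP.
Qed.

Lemma alg_key (X YZ : Type) (al : X -> \bar R) (g : YZ -> \bar R) (G : \bar R)
  (Px : X -> \bar R) (q : X -> YZ -> R) x x' :
  (forall x, 0 <= al x) -> (forall x, al x \is a fin_num) ->
  (forall yz, 0 <= g yz) -> 0 <= G ->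
  (forall x, Px x \is a fin_num) -> (forall x, al x * G <= Px x) ->
  (forall x yz, al x * g yz * Px x = al x * G * (q x yz)%:E) ->
  0 < al x * G -> 0 < al x' * G ->
  exists c, (0 <= c)%R /\ forall yz, q x yz = (c * q x' yz)%R.
Proof.
move=> al0 alf g0 G0 Pxf le eq pos pos'.
have [G1 [px [eG [epx [G10 [px0 H]]]]]] := alg_one al0 alf g0 G0 Pxf le eq pos.
have [G2 [px' [eG' [epx' [G20 [px0' H']]]]]] := alg_one al0 alf g0 G0 Pxf le eq pos'.
move: eG'; rewrite eG => /eqP; rewrite eqe => /eqP e; subst G2.
exists (px / px')%R; split; first by rewrite divr_ge0 // ltW.
move=> yz; rewrite H H'.
have : px' != 0%R by rewrite gt_eqF.
have : G1 != 0%R by rewrite gt_eqF.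
by move=> ? ?; field; apply/andP; split.
Qed.
End Alg.

Section Ent.
Import Order.TTheory GRing.Theory Num.Theory.
Local Open Scope classical_set_scope.
Local Open Scope ring_scope.
Local Open Scope ereal_scope.
Lemma ent0 {R : realType} {d} {T : measurableType d} (P : probability T R)
  (A : finType) (B : choiceType) (X : T -> A) (M : T -> B) :
  (forall x b, measurable [set w | X w = x /\ M w = b]) ->
  (forall b x x', 0 < P [set w | X w = x /\ M w = b] ->
     0 < P [set w | X w = x' /\ M w = b] -> x = x') ->
  cond_entropy P X M = 0.
Proof.
move=> mE uniq; rewrite /cond_entropy; apply: esum1 => -[x b] _ /=.
have := measure_ge0 P [set w | X w = x /\ M w = b].
rewrite le_eqVlt => /orP [/eqP e0 | pos].
  by rewrite -e0 /= mul0r oppr0.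
have tot : P [set w | M w = b] = P [set w | X w = x /\ M w = b].
  rewrite (_ : [set w | M w = b] = \bigcup_(x' in [set: A])
     [set w | X w = x' /\ M w = b]); last first.
    by apply/seteqP; split => w; [move=> Mw; exists (X w) | move=> [x' _ []]].
  rewrite measure_fin_bigcup; last 3 first.
  - exact: finite_finset.
  - by move=> i j _ _ [w [[<- _] [<- _]]].
  - by move=> i _; exact: mE.
  rewrite (fsbigD1 x) //= ?finite_finset // fsbig1 ?adde0 //.
  move=> j [_ /eqP jx].
  have := measure_ge0 P [set w | X w = j /\ M w = b].
  rewrite le_eqVlt => /orP [/eqP -> // | posj].
  by have := uniq b _ _ posj pos => /eqP; rewrite (negbTE jx).
rewrite tot.
have pfin : P [set w | X w = x /\ M w = b] \is a fin_num by apply: fin_num_measure.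
have p0 : (0 < fine (P [set w | X w = x /\ M w = b]))%R.
  by rewrite -lte_fin fineK.
by rewrite divff ?gt_eqF // ln1 mulr0 oppr0.
Qed.

End Ent.

Section Prob.
Import Order.TTheory GRing.Theory Num.Theory.
Local Open Scope classical_set_scope.
Context {R : realType} {d : measure_display} {T : measurableType d}
  (P : probability T R) {dU : measure_display} {U : measurableType dU}
  (rnd : party -> T -> U) {Out : party -> finType} (Pi : protocol U Out).
Hypothesis (wf : wf_protocol Pi).
Local Unset Implicit Arguments.

Definition Qm {X : Type} (o : option X) (v : X) : Prop :=
  if o is Some x then v = x else True.

Definition dec l (m : seq bool) : seq (seq bool) :=
  xget [::] [set g | VR Pi l g /\ flatten g = m].

Definition VRd l m := VR Pi l (dec l m) /\ flatten (dec l m) = m.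

Definition own s := match s with Alice => L12 | Bob => L23 | Charlie => L31 end.

Definition SP s (m : link -> seq bool) (q : option (Out s)) : set U :=
  [set r | VRd (own s) (m (own s)) /\
     Cons Pi s r (dec (lnk1 s) (m (lnk1 s))) (dec (lnk2 s) (m (lnk2 s))) /\
     Qm q (out Pi s r (dec (lnk1 s) (m (lnk1 s))) (dec (lnk2 s) (m (lnk2 s))))].

Definition Rect m qA qB qC : set T :=
  [set w | SP Alice m qA (rnd Alice w) /\ SP Bob m qB (rnd Bob w) /\
           SP Charlie m qC (rnd Charlie w)].

Definition Term : set T := [set w | exists t, terminated Pi (fun j => rnd j w) t].

Lemma dec_final w l : Term w ->
  dec l (rv_tr rnd Pi l w) = final_hist Pi (fun j => rnd j w) l.
Proof.
move=> Tw; have [HV _] := run_char2 wf Tw.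
apply: xget_unique; first by split.
move=> y [Vy Fy]; apply: (VR_inj (wf.1 l)) => //.
Qed.

Lemma char w m qA qB qC :
  (Term w /\ (forall l, rv_tr rnd Pi l w = m l) /\ Qm qA (rv_out rnd Pi Alice w) /\
     Qm qB (rv_out rnd Pi Bob w) /\ Qm qC (rv_out rnd Pi Charlie w))
  <-> Rect m qA qB qC w.
Proof.
split.
  move=> [Tw [Em [QA [QB QC]]]].
  have [HV HC] := run_char2 wf Tw.
  have D l : dec l (m l) = final_hist Pi (fun j => rnd j w) l.
    by rewrite -Em dec_final.
  have VD l : VRd l (m l) by rewrite /VRd D -Em; split.
  by rewrite /Rect /SP /= !D; split; [|split]; (split; [exact: VD|split]);
     try exact: (HC _).
move=> [[VA [CA QA]] [[VB [CB QB]] [VC [CC QC]]]].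
have HV l : VR Pi l (dec l (m l)) by case: l; [case: VA|case: VB|case: VC].
have HC : forall s, Cons Pi s (rnd s w) (dec (lnk1 s) (m (lnk1 s)))
    (dec (lnk2 s) (m (lnk2 s))).
  by case; [exact: CA|exact: CB|exact: CC].
have [Tw E] := run_char1 (u := fun j => rnd j w) HV HC.
split => //; split.
  move=> l; rewrite /rv_tr /transcript E.
  by case: l; [case: VA|case: VB|case: VC].
by rewrite /rv_out /output !E.
Qed.

Hypothesis (mrnd : forall i, measurable_fun setT (rnd i)).
Hypothesis (mp : measurable_protocol Pi).
Hypothesis (ind : forall S1 S2 S3 : set U, measurable S1 -> measurable S2 ->
         measurable S3 ->
         P [set w | S1 (rnd Alice w) /\ S2 (rnd Bob w) /\ S3 (rnd Charlie w)] =
         (P [set w | S1 (rnd Alice w)] * P [set w | S2 (rnd Bob w)] *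
          P [set w | S3 (rnd Charlie w)])%E).
Hypothesis (PT : P Term = 1%E).

Lemma pre_meas s (S : set U) : measurable S -> measurable [set w | S (rnd s w)].
Proof. by move=> mS; have := mrnd s measurableT S mS; rewrite setTI. Qed.

Lemma imp_meas (A : Prop) (S : set U) : measurable S -> measurable [set r | A -> S r].
Proof.
move=> mS; case: (pselect A) => a.
  by rewrite (_ : [set r | A -> S r] = S) //; apply/seteqP; split => r /=; auto.
rewrite (_ : [set r | A -> S r] = setT) //; apply/seteqP; split => r //= _ /a [].
Qed.

Lemma const_meas (K : Prop) (S : set T) : measurable S -> measurable [set w | K /\ S w].
Proof.
move=> mS; case: (pselect K) => k.
  rewrite (_ : [set w | K /\ S w] = S) //; apply/seteqP; split => r /=; first by case.
  by move=> ?; split.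
by rewrite (_ : [set w | K /\ S w] = set0) //; apply/seteqP; split => r //= [].
Qed.

Lemma const_measU (K : Prop) (S : set U) : measurable S -> measurable [set w | K /\ S w].
Proof.
move=> mS; case: (pselect K) => k.
  rewrite (_ : [set w | K /\ S w] = S) //; apply/seteqP; split => r /=; first by case.
  by move=> ?; split.
by rewrite (_ : [set w | K /\ S w] = set0) //; apply/seteqP; split => r //= [].
Qed.

Lemma Cons_meas s h1 h2 : measurable [set r | Cons Pi s r h1 h2].
Proof.
rewrite (_ : [set r | Cons Pi s r h1 h2] = \bigcap_t [set r |
   endpoint (sched Pi t).1 (sched Pi t).2 = s ->
  ~~ stop Pi (sched Pi t).1 (tr Pi (sched Pi t).1 (pick s h1 h2 (sched Pi t).1) t) ->
  msg Pi s t r (tr Pi (lnk1 s) h1 t) (tr Pi (lnk2 s) h2 t) =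
  nth [::] (pick s h1 h2 (sched Pi t).1)
     (size (tr Pi (sched Pi t).1 (pick s h1 h2 (sched Pi t).1) t))]).
  apply: bigcapT_measurable => t; apply: imp_meas; apply: imp_meas.
  exact: mp.1.
by apply/seteqP; split => r /= H t; [move=> _; exact: H | exact: (H t I)].
Qed.

Lemma Qm_meas s q h1 h2 : measurable [set r | Qm q (out Pi s r h1 h2)].
Proof. by case: q => [x|] /=; [exact: mp.2|exact: measurableT]. Qed.

Lemma SP_meas s m q : measurable (SP s m q).
Proof.
apply: const_measU.
apply: measurableI; [exact: Cons_meas|exact: Qm_meas].
Qed.

Lemma Rect_meas m qA qB qC : measurable (Rect m qA qB qC).
Proof.
apply: measurableI; first exact: (pre_meas Alice _ (SP_meas _ _ _)).
by apply: measurableI; [exact: (pre_meas Bob _ (SP_meas _ _ _))|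
   exact: (pre_meas Charlie _ (SP_meas _ _ _))].
Qed.

Definition mk (m : seq bool * seq bool * seq bool) (l : link) : seq bool :=
  match l with L12 => m.1.1 | L23 => m.1.2 | L31 => m.2 end.

Lemma Term_meas : measurable Term.
Proof.
rewrite (_ : Term = \bigcup_(m : seq bool * seq bool * seq bool)
   Rect (mk m) None None None).
  apply: countable_bigcupT_measurable; first exact: countableP.
  by move=> m; exact: Rect_meas.
apply/seteqP; split => w.
  move=> Tw; exists (rv_tr rnd Pi L12 w, rv_tr rnd Pi L23 w, rv_tr rnd Pi L31 w) => //.
  by apply/char; split; [done | split; [by case | done]].
by move=> [m _ /char []].
Qed.

Lemma final_nt w l : ~ Term w -> final_hist Pi (fun j => rnd j w) l = [::].
Proof.
by move=> nT; rewrite /final_hist xgetPN // => t Tt; apply: nT; exists t.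
Qed.

Definition Ev (o12 o23 o31 : option (seq bool)) qA qB qC : set T :=
  [set w | Qm o12 (rv_tr rnd Pi L12 w) /\ Qm o23 (rv_tr rnd Pi L23 w) /\
     Qm o31 (rv_tr rnd Pi L31 w) /\ Qm qA (rv_out rnd Pi Alice w) /\
     Qm qB (rv_out rnd Pi Bob w) /\ Qm qC (rv_out rnd Pi Charlie w)].

Lemma Ev_meas o12 o23 o31 qA qB qC : measurable (Ev o12 o23 o31 qA qB qC).
Proof.
rewrite (_ : Ev _ _ _ _ _ _ = (\bigcup_(m : seq bool * seq bool * seq bool)
   [set w | Qm o12 m.1.1 /\ Qm o23 m.1.2 /\ Qm o31 m.2 /\ Rect (mk m) qA qB qC w])
  `|` (~` Term `&` [set w | Qm o12 [::] /\ Qm o23 [::] /\ Qm o31 [::] /\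
     ([set w | Qm qA (out Pi Alice (rnd Alice w) [::] [::])] `&`
      ([set w | Qm qB (out Pi Bob (rnd Bob w) [::] [::])] `&`
       [set w | Qm qC (out Pi Charlie (rnd Charlie w) [::] [::])])) w])).
  apply: measurableU.
    apply: countable_bigcupT_measurable; first exact: countableP.
    by move=> m; do 3!apply: const_meas; exact: Rect_meas.
  apply: measurableI; first exact: (measurableC Term_meas).
  do 3!apply: const_meas.
  apply: measurableI; first exact: (pre_meas Alice _ (Qm_meas Alice qA [::] [::])).
  apply: measurableI; first exact: (pre_meas Bob _ (Qm_meas Bob qB [::] [::])).
  exact: (pre_meas Charlie _ (Qm_meas Charlie qC [::] [::])).
apply/seteqP; split => w.
  case: (pselect (Term w)) => Tw.
    move=> [E12 [E23 [E31 [QA [QB QC]]]]]; left.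
    exists (rv_tr rnd Pi L12 w, rv_tr rnd Pi L23 w, rv_tr rnd Pi L31 w) => //=.
    by do 3!split => //; apply/char; split; [done | split; [by case | done]].
  move=> [E12 [E23 [E31 [QA [QB QC]]]]]; right; split => //.
  move: E12 E23 E31 QA QB QC.
  by rewrite /rv_tr /rv_out /transcript /output !final_nt.
case.
  move=> [m _ [E12 [E23 [E31 /char [Tw [Em [QA [QB QC]]]]]]]].
  by rewrite /Ev /= !Em.
move=> [Tw [E12 [E23 [E31 [QA [QB QC]]]]]].
by rewrite /Ev /= /rv_tr /rv_out /transcript /output !final_nt.
Qed.

Local Open Scope ereal_scope.

Lemma Pfin (S : set T) : measurable S -> P S \is a fin_num.
Proof. by move=> mS; apply: fin_num_measure. Qed.

Lemma P_term (F : set T) : measurable F -> P F = P (F `&` Term).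
Proof.
move=> mF; rewrite (measureDI P mF Term_meas).
rewrite [X in X + _](_ : _ = 0) ?add0e //.
apply: (subset_measure0 (B := ~` Term)).
- by apply: measurableD => //; exact: Term_meas.
- exact: measurableC Term_meas.
- by move=> w [].
- by have := probability_setC P Term_meas; rewrite PT subee.

Qed.

Lemma union_sum (F : seq bool -> set T) : (forall m, measurable (F m)) ->
  (forall m m' w, F m w -> F m' w -> m = m') ->
  P (\bigcup_m F m) =
  \sum_(n <oo) (if pickle_inv n is Some m then P (F m) else 0).
Proof.
move=> mF dF.
pose G n := if pickle_inv n is Some m then F m else set0.
have mG n : measurable (G n) by rewrite /G; case: pickle_inv.
have -> : \bigcup_m F m = \bigcup_n G n.
  apply/seteqP; split => w [m _ Fw].
    by exists (pickle m) => //; rewrite /G pickleK_inv.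
  by move: Fw; rewrite /G; case E: pickle_inv => [m'|] // Fw; exists m'.
rewrite measure_semi_bigcup //.
- by apply: eq_eseriesr => n _; rewrite /G; case: pickle_inv.
- move=> n n' _ _ [w []]; rewrite /G.
  case E: (pickle_inv n) => [m|] //; case E': (pickle_inv n') => [m'|] // Fw Fw'.
  have emm := dF _ _ _ Fw Fw'; subst m'.
  have h1 := @pickle_invK (seq bool) n; have h2 := @pickle_invK (seq bool) n'.
  by rewrite E /= in h1; rewrite E' /= in h2; rewrite -h1 -h2.
- exact: bigcupT_measurable.
Qed.

Lemma sum_const (al : \bar R) (h : seq bool -> \bar R) : al \is a fin_num ->
  (forall m, 0 <= h m) ->
  \sum_(n <oo) (if pickle_inv n is Some m then al * h m else 0) =
  al * \sum_(n <oo) (if pickle_inv n is Some m then h m else 0).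
Proof.
move=> fa h0; rewrite -(fineK fa) -nneseriesZl.
  by apply: eq_eseriesr => n _; case: pickle_inv => [m|]; [by [] | by rewrite mule0].
by move=> n _; case: pickle_inv.
Qed.

Definition PS s m q := P [set w | SP s m q (rnd s w)].

Lemma PS_fin s m q : PS s m q \is a fin_num.
Proof. exact/Pfin/pre_meas/SP_meas. Qed.

Lemma PS_ge0 s m q : 0 <= PS s m q.
Proof. exact: measure_ge0. Qed.

Lemma P_Rect m qA qB qC : P (Rect m qA qB qC) = PS Alice m qA * PS Bob m qB * PS Charlie m qC.
Proof. by rewrite /Rect ind //; exact: SP_meas. Qed.

Lemma Rect_tr m qA qB qC w l : Rect m qA qB qC w -> rv_tr rnd Pi l w = m l.
Proof. by move=> /char [_ [E _]]. Qed.

Definition gA a c qB qC := \sum_(n <oo) (if pickle_inv n is Some m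
   then PS Bob (mk (a, m, c)) qB * PS Charlie (mk (a, m, c)) qC else 0).
Definition gB a b qA qC := \sum_(n <oo) (if pickle_inv n is Some m
   then PS Alice (mk (a, b, m)) qA * PS Charlie (mk (a, b, m)) qC else 0).
Definition gC b c qA qB := \sum_(n <oo) (if pickle_inv n is Some m
   then PS Alice (mk (m, b, c)) qA * PS Bob (mk (m, b, c)) qB else 0).

Lemma factA a c qA qB qC : P (Ev (Some a) None (Some c) qA qB qC) =
  PS Alice (mk (a, [::], c)) qA * gA a c qB qC.
Proof.
rewrite P_term; last exact: Ev_meas.
rewrite (_ : _ `&` _ = \bigcup_m Rect (mk (a, m, c)) qA qB qC); last first.
  apply/seteqP; split => w.
    move=> [[E12 [_ [E31 [QA [QB QC]]]]] Tw].
    exists (rv_tr rnd Pi L23 w) => //; apply/char.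
    by split => //; split => //; case.
  move=> [m _ /char [Tw [El [QA [QB QC]]]]]; split => //.
  by rewrite /Ev /= !El.
rewrite union_sum; last 2 first.
- by move=> m; exact: Rect_meas.
- move=> m m' w R1 R2; have := Rect_tr _ _ _ _ _ L23 R1.
  by rewrite (Rect_tr _ _ _ _ _ L23 R2) /= => ->.
rewrite /gA -sum_const; last 2 first.
- exact: PS_fin.
- by move=> m; apply: mule_ge0; exact: PS_ge0.
apply: eq_eseriesr => n _; case: pickle_inv => [m|]; last by [].
by rewrite P_Rect -muleA.
Qed.

Lemma factB a b qA qB qC : P (Ev (Some a) (Some b) None qA qB qC) =
  PS Bob (mk (a, b, [::])) qB * gB a b qA qC.
Proof.
rewrite P_term; last exact: Ev_meas.
rewrite (_ : _ `&` _ = \bigcup_m Rect (mk (a, b, m)) qA qB qC); last first.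
  apply/seteqP; split => w.
    move=> [[E12 [E23 [_ [QA [QB QC]]]]] Tw].
    exists (rv_tr rnd Pi L31 w) => //; apply/char.
    by split => //; split => //; case.
  move=> [m _ /char [Tw [El [QA [QB QC]]]]]; split => //.
  by rewrite /Ev /= !El.
rewrite union_sum; last 2 first.
- by move=> m; exact: Rect_meas.
- move=> m m' w R1 R2; have := Rect_tr _ _ _ _ _ L31 R1.
  by rewrite (Rect_tr _ _ _ _ _ L31 R2) /= => ->.
rewrite /gB -sum_const; last 2 first.
- exact: PS_fin.
- by move=> m; apply: mule_ge0; exact: PS_ge0.
apply: eq_eseriesr => n _; case: pickle_inv => [m|]; last by [].
by rewrite P_Rect (muleC (PS Alice _ _)) -muleA.
Qed.

Lemma factC b c qA qB qC : P (Ev None (Some b) (Some c) qA qB qC) =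
  PS Charlie (mk ([::], b, c)) qC * gC b c qA qB.
Proof.
rewrite P_term; last exact: Ev_meas.
rewrite (_ : _ `&` _ = \bigcup_m Rect (mk (m, b, c)) qA qB qC); last first.
  apply/seteqP; split => w.
    move=> [[_ [E23 [E31 [QA [QB QC]]]]] Tw].
    exists (rv_tr rnd Pi L12 w) => //; apply/char.
    by split => //; split => //; case.
  move=> [m _ /char [Tw [El [QA [QB QC]]]]]; split => //.
  by rewrite /Ev /= !El.
rewrite union_sum; last 2 first.
- by move=> m; exact: Rect_meas.
- move=> m m' w R1 R2; have := Rect_tr _ _ _ _ _ L12 R1.
  by rewrite (Rect_tr _ _ _ _ _ L12 R2) /= => ->.
rewrite /gC -sum_const; last 2 first.
- exact: PS_fin.
- by move=> m; apply: mule_ge0; exact: PS_ge0.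
apply: eq_eseriesr => n _; case: pickle_inv => [m|]; last by [].
by rewrite P_Rect muleC.
Qed.


Lemma pair_eqE (A B : Type) (u a : A) (v c : B) : ((u, v) = (a, c)) = (u = a /\ v = c).
Proof. by apply: propext; split; [case=> -> ->|case=> -> ->]. Qed.

Lemma eq4 (mu : set T -> \bar R) (S1 S2 S3 S4 S1' S2' S3' S4' : set T) :
  S1 = S1' -> S2 = S2' -> S3 = S3' -> S4 = S4' ->
  mu S1 * mu S2 = mu S3 * mu S4 -> mu S1' * mu S2' = mu S3' * mu S4'.
Proof. by move=> -> -> -> ->. Qed.

Lemma Ev_le o12 o23 o31 qA qB qC o12' o23' o31' qA' qB' qC' :
  Ev o12 o23 o31 qA qB qC `<=` Ev o12' o23' o31' qA' qB' qC' ->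
  P (Ev o12 o23 o31 qA qB qC) <= P (Ev o12' o23' o31' qA' qB' qC').
Proof. by move=> sub; apply: le_measure => //; rewrite inE; exact: Ev_meas. Qed.

Ltac seteq := apply/seteqP; split => w /=; rewrite /Ev /Qm /= ?pair_eqE; tauto.

Lemma gA_ge0 a c qB qC : 0 <= gA a c qB qC.
Proof.
apply: nneseries_ge0 => n _ _; case: pickle_inv => // m.
by apply: mule_ge0; exact: PS_ge0.
Qed.

Lemma entA (p : Out Alice -> Out Bob -> Out Charlie -> R) :
  normal_form p -> secure_sampling P rnd Pi p ->
  cond_entropy P (rv_out rnd Pi Alice)
     (fun w => (rv_tr rnd Pi L12 w, rv_tr rnd Pi L31 w)) = 0.
Proof.
move=> [nfA _ _] [ssP mkA _ _].
apply: ent0.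
  move=> x [a c].
  rewrite (_ : [set w | _ /\ _] = Ev (Some a) None (Some c) (Some x) None None).
    exact: Ev_meas.
  by seteq.
move=> [a c] x x'.
have E : forall x, [set w | rv_out rnd Pi Alice w = x /\
    (rv_tr rnd Pi L12 w, rv_tr rnd Pi L31 w) = (a, c)] =
    Ev (Some a) None (Some c) (Some x) None None by move=> ?; seteq.
rewrite !E !factA => pos pos'.
apply: nfA.
have Hle : forall x0, PS Alice (mk (a, [::], c)) (Some x0) * gA a c None None <=
    P (Ev None None None (Some x0) None None).
  move=> x0; rewrite -factA; apply: Ev_le; move=> w; rewrite /Ev /=; tauto.
have Heq : forall x0 (yz : Out Bob * Out Charlie),
    PS Alice (mk (a, [::], c)) (Some x0) * gA a c (Some yz.1) (Some yz.2) *
    P (Ev None None None (Some x0) None None) =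
    PS Alice (mk (a, [::], c)) (Some x0) * gA a c None None * (p x0 yz.1 yz.2)%:E.
  move=> x0 [y z] /=.
  rewrite -!factA -ssP.
  move: (mkA (a, c) x0 (y, z)); apply: eq4; seteq.
have [c0 [c00 Hc]] := @alg_key R (Out Alice) (Out Bob * Out Charlie)%type
  (fun x => PS Alice (mk (a, [::], c)) (Some x))
  (fun yz => gA a c (Some yz.1) (Some yz.2)) (gA a c None None)
  (fun x => P (Ev None None None (Some x) None None))
  (fun x yz => p x yz.1 yz.2) x x'
  (fun _ => PS_ge0 _ _ _) (fun _ => PS_fin _ _ _) (fun _ => gA_ge0 _ _ _ _)
  (gA_ge0 _ _ _ _) (fun _ => Pfin _ (Ev_meas _ _ _ _ _ _)) Hle Heq pos pos'.
by exists c0; split => // y z; exact: (Hc (y, z)).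
Qed.

Lemma gB_ge0 a b qA qC : 0 <= gB a b qA qC.
Proof.
apply: nneseries_ge0 => n _ _; case: pickle_inv => // m.
by apply: mule_ge0; exact: PS_ge0.
Qed.

Lemma gC_ge0 b c qA qB : 0 <= gC b c qA qB.
Proof.
apply: nneseries_ge0 => n _ _; case: pickle_inv => // m.
by apply: mule_ge0; exact: PS_ge0.
Qed.

Lemma entB (p : Out Alice -> Out Bob -> Out Charlie -> R) :
  normal_form p -> secure_sampling P rnd Pi p ->
  cond_entropy P (rv_out rnd Pi Bob)
     (fun w => (rv_tr rnd Pi L12 w, rv_tr rnd Pi L23 w)) = 0.
Proof.
move=> [_ nfB _] [ssP _ mkB _].
apply: ent0.
  move=> x [a b].
  rewrite (_ : [set w | _ /\ _] = Ev (Some a) (Some b) None None (Some x) None).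
    exact: Ev_meas.
  by seteq.
move=> [a b] x x'.
have E : forall x, [set w | rv_out rnd Pi Bob w = x /\
    (rv_tr rnd Pi L12 w, rv_tr rnd Pi L23 w) = (a, b)] =
    Ev (Some a) (Some b) None None (Some x) None by move=> ?; seteq.
rewrite !E !factB => pos pos'.
apply: nfB.
have Hle : forall x0, PS Bob (mk (a, b, [::])) (Some x0) * gB a b None None <=
    P (Ev None None None None (Some x0) None).
  move=> x0; rewrite -factB; apply: Ev_le; move=> w; rewrite /Ev /=; tauto.
have Heq : forall x0 (yz : Out Alice * Out Charlie),
    PS Bob (mk (a, b, [::])) (Some x0) * gB a b (Some yz.1) (Some yz.2) *
    P (Ev None None None None (Some x0) None) =
    PS Bob (mk (a, b, [::])) (Some x0) * gB a b None None * (p yz.1 x0 yz.2)%:E.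
  move=> x0 [y z] /=.
  rewrite -!factB -ssP.
  move: (mkB (a, b) x0 (y, z)); apply: eq4; seteq.
have [c0 [c00 Hc]] := @alg_key R (Out Bob) (Out Alice * Out Charlie)%type
  (fun x => PS Bob (mk (a, b, [::])) (Some x))
  (fun yz => gB a b (Some yz.1) (Some yz.2)) (gB a b None None)
  (fun x => P (Ev None None None None (Some x) None))
  (fun x yz => p yz.1 x yz.2) x x'
  (fun _ => PS_ge0 _ _ _) (fun _ => PS_fin _ _ _) (fun _ => gB_ge0 _ _ _ _)
  (gB_ge0 _ _ _ _) (fun _ => Pfin _ (Ev_meas _ _ _ _ _ _)) Hle Heq pos pos'.
by exists c0; split => // y z; exact: (Hc (y, z)).
Qed.

Lemma entC (p : Out Alice -> Out Bob -> Out Charlie -> R) :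
  normal_form p -> secure_sampling P rnd Pi p ->
  cond_entropy P (rv_out rnd Pi Charlie)
     (fun w => (rv_tr rnd Pi L23 w, rv_tr rnd Pi L31 w)) = 0.
Proof.
move=> [_ _ nfC] [ssP _ _ mkC].
apply: ent0.
  move=> x [b c].
  rewrite (_ : [set w | _ /\ _] = Ev None (Some b) (Some c) None None (Some x)).
    exact: Ev_meas.
  by seteq.
move=> [b c] x x'.
have E : forall x, [set w | rv_out rnd Pi Charlie w = x /\
    (rv_tr rnd Pi L23 w, rv_tr rnd Pi L31 w) = (b, c)] =
    Ev None (Some b) (Some c) None None (Some x) by move=> ?; seteq.
rewrite !E !factC => pos pos'.
apply: nfC.
have Hle : forall x0, PS Charlie (mk ([::], b, c)) (Some x0) * gC b c None None <=
    P (Ev None None None None None (Some x0)).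
  move=> x0; rewrite -factC; apply: Ev_le; move=> w; rewrite /Ev /=; tauto.
have Heq : forall x0 (yz : Out Alice * Out Bob),
    PS Charlie (mk ([::], b, c)) (Some x0) * gC b c (Some yz.1) (Some yz.2) *
    P (Ev None None None None None (Some x0)) =
    PS Charlie (mk ([::], b, c)) (Some x0) * gC b c None None * (p yz.1 yz.2 x0)%:E.
  move=> x0 [y z] /=.
  rewrite -!factC -ssP.
  move: (mkC (b, c) x0 (y, z)); apply: eq4; seteq.
have [c0 [c00 Hc]] := @alg_key R (Out Charlie) (Out Alice * Out Bob)%type
  (fun x => PS Charlie (mk ([::], b, c)) (Some x))
  (fun yz => gC b c (Some yz.1) (Some yz.2)) (gC b c None None)
  (fun x => P (Ev None None None None None (Some x)))
  (fun x yz => p yz.1 yz.2 x) x x'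
  (fun _ => PS_ge0 _ _ _) (fun _ => PS_fin _ _ _) (fun _ => gC_ge0 _ _ _ _)
  (gC_ge0 _ _ _ _) (fun _ => Pfin _ (Ev_meas _ _ _ _ _ _)) Hle Heq pos pos'.
by exists c0; split => // y z; exact: (Hc (y, z)).
Qed.

End Prob.

Theorem lemma6 (R : realType) (d : measure_display) (T : measurableType d)
  (P : probability T R) (dU : measure_display) (U : measurableType dU)
  (rnd : party -> T -> U) (Out : party -> finType) (Pi : protocol U Out)
  (p : Out Alice -> Out Bob -> Out Charlie -> R) :
  is_distribution p -> normal_form p ->
  protocol_setting P rnd Pi -> secure_sampling P rnd Pi p ->
  [/\ cond_entropy P (rv_out rnd Pi Alice)
        (fun w => (rv_tr rnd Pi L12 w, rv_tr rnd Pi L31 w)) = 0%E,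
      cond_entropy P (rv_out rnd Pi Bob)
        (fun w => (rv_tr rnd Pi L12 w, rv_tr rnd Pi L23 w)) = 0%E &
      cond_entropy P (rv_out rnd Pi Charlie)
        (fun w => (rv_tr rnd Pi L23 w, rv_tr rnd Pi L31 w)) = 0%E].
Proof.
move=> _ nf [mrnd ind mp wf PT] ss; split.
- exact: (@entA R d T P dU U rnd Out Pi wf mrnd mp ind PT p nf ss).
- exact: (@entB R d T P dU U rnd Out Pi wf mrnd mp ind PT p nf ss).
- exact: (@entC R d T P dU U rnd Out Pi wf mrnd mp ind PT p nf ss).
Qed.
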